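(* Let $X$ be a connected involutive rack. If $(V,\pi)$ is a strong irreducible representation of $X$ such that there exists $x_0\in X$ with $\{v\in V:\pi_{x_0}(v)=v\}=\{0\}$, then $V$ is one-dimensional.
   Context: A rack is a set $X$ with a binary operation $\rhd$ such that each $x\mapsto x\rhd y$ is bijective and $(x\rhd y)\rhd z=(x\rhd z)\rhd(y\rhd z)$. $X$ is involutive if $(x\rhd y)\rhd y=x$ for all $x,y$, and connected if for all $x,z\in X$ there is $y$ with $z=x\rhd y$. A stabilizing family of $X$ is a finite family $(u_1,\ldots,u_n)$ with $(\cdots(x\rhd u_1)\cdots)\rhd u_n=x$ for all $x$. A representation of $X$ is a complex vector space $V$ with $\pi:X\to GL(V)$ satisfying $\pi_{x\rhd y}=\pi_y\pi_x\pi_y^{-1}$; it is strong if $\pi_{u_n}\cdots\pi_{u_1}=\mathrm{id}_V$ for every stabilizing family $(u_1,\ldots,u_n)$, and irreducible if its only subspaces invariant under all $\pi_x$ are $\{0\}$ and $V$. *)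

(* Defs.v *)
From HB Require Import structures.
From mathcomp Require Import all_boot all_order all_algebra.
From mathcomp Require Import complex reals.
Set Implicit Arguments. Unset Strict Implicit. Unset Printing Implicit Defensive.
Import Order.TTheory GRing.Theory Num.Theory.
Local Open Scope ring_scope.

Definition is_rack (X : Type) (op : X -> X -> X) : Prop :=
  (forall y, bijective (fun x => op x y)) /\
  (forall x y z, op (op x y) z = op (op x z) (op y z)).

Definition rack_involutive (X : Type) (op : X -> X -> X) : Prop :=
  forall x y, op (op x y) y = x.

Definition rack_connected (X : Type) (op : X -> X -> X) : Prop :=
  forall x z, exists y, z = op x y.

Definition stabilizing (X : Type) (op : X -> X -> X) (us : seq X) : Prop :=
  forall x, foldl op x us = x.

(* pi : X -> GL(V) with pi_{x |> y} = pi_y pi_x pi_y^{-1}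
   (stated as pi_{x |> y} o pi_y = pi_y o pi_x). *)
Definition is_rack_rep (F : fieldType) (V : lmodType F) (X : Type)
  (op : X -> X -> X) (pi : X -> {linear V -> V}) : Prop :=
  (forall x, bijective (pi x)) /\
  (forall x y v, pi (op x y) (pi y v) = pi y (pi x v)).

Definition strong_rep (F : fieldType) (V : lmodType F) (X : Type)
  (op : X -> X -> X) (pi : X -> {linear V -> V}) : Prop :=
  forall us : seq X, stabilizing op us ->
    forall v, foldl (fun w u => pi u w) v us = v.

Definition subspace (F : fieldType) (V : lmodType F) (S : V -> Prop) : Prop :=
  S 0 /\ (forall u v, S u -> S v -> S (u + v)) /\
  (forall (c : F) v, S v -> S (c *: v)).

Definition invariant (F : fieldType) (V : lmodType F) (X : Type)
  (pi : X -> {linear V -> V}) (S : V -> Prop) : Prop :=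
  forall x v, S v -> S (pi x v).

Definition irreducible_rep (F : fieldType) (V : lmodType F) (X : Type)
  (pi : X -> {linear V -> V}) : Prop :=
  (exists v : V, v != 0) /\
  (forall S : V -> Prop, subspace S -> invariant pi S ->
     (forall v, S v <-> v = 0) \/ (forall v, S v)).

Definition one_dimensional (F : fieldType) (V : lmodType F) : Prop :=
  exists v : V, v != 0 /\ forall w : V, exists c : F, w = c *: v.

(* Main.v *)
Require Import Defs.
From HB Require Import structures.
From mathcomp Require Import all_boot all_order all_algebra.
From mathcomp Require Import complex reals.
Import GRing.Theory Num.Theory.
Local Open Scope ring_scope.

Theorem mainTheorem15 (R : realType) (X : Type) (op : X -> X -> X)
  (V : lmodType (complex R)) (pi : X -> {linear V -> V}) :
  is_rack op -> rack_involutive op -> rack_connected op ->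
  is_rack_rep op pi -> strong_rep op pi -> irreducible_rep pi ->
  (exists x0 : X, forall v : V, pi x0 v = v -> v = 0) ->
  one_dimensional V.
Proof.
move=> _ Hinv Hcon [Hbij Hrep] Hstr [[v0 Hv0] Hirr] [x0 Hx0].
have Hsq : forall v, pi x0 (pi x0 v) = v.
  move=> v; have := Hstr [:: x0; x0] _ v; apply.
  by move=> x /=; rewrite Hinv.
have Hneg0 : forall v, pi x0 v = - v.
  move=> v; have : v + pi x0 v = 0.
    by apply: Hx0; rewrite linearD /= Hsq addrC.
  by move=> H; apply: (addrI v); rewrite H subrr.
have Hneg : forall x v, pi x v = - v.
  move=> x v; have [y ->] := Hcon x0 x.
  have [g Hg1 Hg2] := Hbij y.
  by rewrite -(Hg2 v) Hrep Hneg0 linearN.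
case: (Hirr (fun w => exists c, w = c *: v0)).
- split; first by exists 0; rewrite scale0r.
  split.
    by move=> u w [a ->] [b ->]; exists (a + b); rewrite scalerDl.
  by move=> c w [a ->]; exists (c * a); rewrite scalerA.
- by move=> x w [a ->]; exists (- a); rewrite Hneg scaleNr.
- move=> H; have : v0 = 0 by apply/H; exists 1; rewrite scale1r.
  by move/eqP; rewrite (negbTE Hv0).
- by move=> H; exists v0; split.
Qed.
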